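(* If $\delta$ is a positive real number with $\delta\le\inf_{0<\varepsilon<1}\Delta(\varepsilon)/\varepsilon^2$, then $R(g,n)\le\delta^{-1/2}\sqrt{gn}$ for all integers $n\ge g\ge1$.
   Context: A set $S$ of integers is a $B^*[g]$ set if for every integer $m$ there are at most $g$ ordered pairs $(s_1,s_2)\in S\times S$ with $s_1+s_2=m$. $R(g,n)$ is the maximum cardinality of a $B^*[g]$ set contained in $\{1,2,\dots,n\}$. Let $\lambda$ be Lebesgue measure; a set $C\subseteq\mathbb{R}$ is symmetric if there is $c$ with $c+x\in C\iff c-x\in C$; $D(A):=\sup\{\lambda(C): C\subseteq A \text{ measurable and symmetric}\}$, and $\Delta(\varepsilon):=\inf\{D(A): A\subseteq[0,1) \text{ measurable},\ \lambda(A)=\varepsilon\}$. *)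

(* Defs.v *)
From HB Require Import structures.
From mathcomp Require Import all_boot all_order all_algebra.
From mathcomp Require Import all_classical all_reals all_analysis.
Set Implicit Arguments. Unset Strict Implicit. Unset Printing Implicit Defensive.
Import Order.TTheory GRing.Theory Num.Theory.

Local Open Scope classical_set_scope.
Local Open Scope ring_scope.

(* Since all elements are natural numbers, sums are naturals, so it
   suffices to quantify over m : nat (for negative m there are no pairs). *)
Definition Bstar_set (g n : nat) (S : {set 'I_n.+1}) : bool :=
  [forall m : 'I_(2 * n).+1,
     #|[set p : 'I_n.+1 * 'I_n.+1 |
          [&& p.1 \in S, p.2 \in S & (p.1 + p.2 == m)%N]]| <= g]%N.

Definition Rgn (g n : nat) : nat :=
  \max_(S : {set 'I_n.+1} | (ord0 \notin S) && Bstar_set g S) #|S|.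

(* The real line equipped with the Lebesgue (completed) sigma-algebra. *)
Definition Leb (R : realType) := caratheodory_type ((@wlength R idfun)^*)%mu.

Definition lambda (R : realType) : set (Leb R) -> \bar R :=
  @completed_lebesgue_measure R.

Definition symmetric_set (R : realType) (C : set R) : Prop :=
  exists c : R, forall x : R, C (c + x) <-> C (c - x).

Definition Dsym (R : realType) (A : set (Leb R)) : \bar R :=
  ereal_sup [set lambda C | C in
    [set C : set (Leb R) | [/\ C `<=` A, measurable C & symmetric_set C]]].

Definition Delta (R : realType) (eps : R) : \bar R :=
  ereal_inf [set Dsym A | A in
    [set A : set (Leb R) | [/\ A `<=` `[0, 1[, measurable A &
                               lambda A = eps%:E]]].

(* Main.v *)
Require Import Defs.
From HB Require Import structures.
From mathcomp Require Import all_boot all_order all_algebra.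
From mathcomp Require Import all_classical all_reals all_analysis.
From mathcomp Require Import zify ring lra.
Import Order.TTheory GRing.Theory Num.Theory.
Local Open Scope classical_set_scope.
Local Open Scope ring_scope.

Section S.
Local Open Scope ereal_scope.
Lemma itv_lam (R : realType) (i : interval R) : lambda ([set` i] : set (Leb R)) =
  (if i.1 < i.2 then (i.2 : \bar R) - i.1 else 0).
Proof. exact: (lebesgue_measure_itv i). Qed.
End S.

Section Main.
Variable R : realType.

Lemma itv_meas (i : interval R) : measurable ([set` i] : set (Leb R)).
Proof. apply: sub_caratheodory. exact: measurable_itv. Qed.

Lemma itv_lam_le (b1 b2 : bool) (a b w : R) : 0 <= w -> b - a <= w ->
  (lambda ([set` Interval (BSide b1 a) (BSide b2 b)] : set (Leb R)) <= w%:E)%E.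
Proof.
move=> w0 baw; rewrite itv_lam /=.
case: ifP => _; rewrite ?lee_fin //.
Qed.

Lemma itv_lam_co (a b : R) : a <= b ->
  lambda ([set` Interval (BLeft a) (BLeft b)] : set (Leb R)) = (b - a)%:E.
Proof.
move=> ab; rewrite itv_lam /=.
case: ifP => // hb; have ba : b <= a by move: hb; rewrite lte_fin => /negbT; rewrite -leNgt.
have -> : b = a by apply/eqP; rewrite eq_le ab ba.
by rewrite subrr.
Qed.

Definition ufold (T : Type) (F : T -> set (Leb R)) (l : seq T) : set (Leb R) :=
  foldr (fun i X => F i `|` X) set0 l.
Arguments ufold {T} F l.

Lemma ufold_meas T (F : T -> set (Leb R)) l :
  (forall i, measurable (F i)) -> measurable (ufold F l).
Proof.
move=> mF; elim: l => [|i l IH] /=; first exact: measurable0.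
exact: measurableU.
Qed.

Lemma ufold_le T (F : T -> set (Leb R)) l (w : R) :
  (forall i, measurable (F i)) -> (forall i, (lambda (F i) <= w%:E)%E) ->
  (lambda (ufold F l) <= ((size l)%:R * w)%:E)%E.
Proof.
move=> mF lF; elim: l => [|i l IH] /=.
  by rewrite /lambda measure0 mul0r.
rewrite /lambda; have := measureU2 (@completed_lebesgue_measure R) (mF i) (@ufold_meas _ F l mF). move=> H. apply: le_trans H _.
rewrite -nat1r mulrDl mul1r EFinD; apply: leeD; [exact: lF | exact: IH].
Qed.

Lemma ufold_eq (T : eqType) (F : T -> set (Leb R)) l (w : R) :
  (forall i, measurable (F i)) -> (forall i, lambda (F i) = w%:E) ->
  (forall i j x, F i x -> F j x -> i = j) -> uniq l ->
  lambda (ufold F l) = ((size l)%:R * w)%:E.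
Proof.
move=> mF lF dF; elim: l => [|i l IH] /=.
  by rewrite /lambda measure0 mul0r.
case/andP => il ul.
have disj : F i `&` ufold F l = set0.
  apply/seteqP; split => // x [Fx Ux]; exfalso; move: il Ux.
  elim: l {IH ul} => [|j l IH2] //=. rewrite in_cons negb_or => /andP[ij il] [Fj|Ul].
  - by move: ij; rewrite (dF _ _ _ Fx Fj) eqxx.
  - exact: IH2.
transitivity (lambda (F i) + lambda (ufold F l))%E.
  exact: (measureU (@completed_lebesgue_measure R) (mF i) (@ufold_meas _ F l mF) disj).
by rewrite lF (IH ul) -nat1r mulrDl mul1r EFinD.
Qed.

Lemma ufoldP (T : eqType) (F : T -> set (Leb R)) l y :
  ufold F l y <-> exists2 i, i \in l & F i y.
Proof.
elim: l => [|i l IH] /=; first by split => // [[]].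
split.
  case=> [Fy|/IH [j jl Fj]]; first by exists i; rewrite ?mem_head.
  by exists j; rewrite // in_cons jl orbT.
case=> j; rewrite in_cons => /orP[/eqP->|jl Fj]; first by left.
by right; apply/IH; exists j.
Qed.

Lemma int_eq (a : nat) (m : int) :
  (a%:R : R) < m%:~R + 1 -> m%:~R < (a%:R : R) + 1 -> a%:Z = m.
Proof.
have e1 : (a%:R : R) = (a%:Z)%:~R by [].
rewrite e1 -[1 : R]/((1:int)%:~R) -!intrD !ltr_int => h1 h2.
lia.
Qed.

Definition Tset n (S : {set 'I_n.+1}) (m : int) : {set 'I_n.+1} :=
  [set x in S | [exists y in S, ((x : nat) + y)%:Z == m]].
Arguments Tset {n} S m.

Lemma card_T g n (S : {set 'I_n.+1}) m : Bstar_set g S -> (#|Tset S m| <= g)%N.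
Proof.
move=> B.
case: (set_0Vmem (Tset S m)) => [->|[x]]; first by rewrite cards0.
rewrite inE => /andP[xS /existsP[y /andP[yS /eqP e]]].
have hm : (x + y < (2*n).+1)%N.
  have := ltn_ord x; have := ltn_ord y; lia.
move/forallP: B => /(_ (Ordinal hm)) le.
apply: (leq_trans _ le).

apply: (leq_trans _ (leq_imset_card fst _)).
apply: subset_leq_card; apply/fintype.subsetP => z.
rewrite inE => /andP[zS /existsP[w /andP[wS /eqP e2]]].
apply/imsetP; exists (z, w) => //.
rewrite inE /= zS wS /=; apply/eqP.
by move: e2; rewrite -e => -[].
Qed.

Definition cell (L : R) n (x : 'I_n.+1) : set (Leb R) :=
  [set` Interval (BLeft ((x%:R - 1) * L)) (BLeft (x%:R * L))].
Arguments cell L {n} x.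

Lemma main_bound (g n : nat) (S : {set 'I_n.+1}) (L : R) (C : set (Leb R)) :
  0 < L -> Bstar_set g S -> measurable C -> symmetric_set C ->
  C `<=` ufold (cell L) (enum S) -> (lambda C <= (g%:R * L)%:E)%E.
Proof.
move=> L0 B mC [c Hc] CA.
set v := 2 * c / L + 2.
set m0 := Num.floor v.
set f := v - m0%:~R.
have f0 : 0 <= f by rewrite /f subr_ge0 floor_le.
have f1 : f < 1.
  have h := floorD1_gt v.
  have e : ((m0 + 1)%:~R : R) = m0%:~R + 1 by rewrite intrD.
  rewrite /f; rewrite e in h; lra.
have c2 : 2 * c = (m0%:~R + f - 2) * L.
  have e : m0%:~R + f - 2 = 2 * c / L by rewrite /f /v; lra.
  by rewrite e divfK // gt_eqF.
set cA := fun x : 'I_n.+1 => ([set` Interval (BLeft ((x%:R - 1) * L)) (BRight ((x%:R - 1 + f) * L))] : set (Leb R)).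
set cB := fun x : 'I_n.+1 => ([set` Interval (BRight ((x%:R - 1 + f) * L)) (BLeft (x%:R * L))] : set (Leb R)).
have sub : C `<=` ufold cA (enum (Tset S m0)) `|` ufold cB (enum (Tset S (m0 - 1))).
  move=> y Cy.
  have /ufoldP [x] := CA y Cy; rewrite mem_enum => xS.
  rewrite /cell /= in_itv /= => /andP[xy1 xy2].
  have Cy2 : C (c - (y - c)).
    apply: (Hc (y - c)).1; by rewrite addrC subrK.
  have /ufoldP [x2] := CA _ Cy2; rewrite mem_enum => x2S.
  rewrite /cell /= in_itv /= => /andP[x2y1 x2y2].
  have [yf|yf] := lerP y ((x%:R - 1 + f) * L).
  - left; apply/ufoldP; exists x.
      rewrite mem_enum inE xS /=; apply/existsP; exists x2; rewrite x2S /=.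
      apply/eqP; apply: int_eq; rewrite natrD.
        nra.
      nra.
    by rewrite /cA /= in_itv /= xy1 yf.
  - right; apply/ufoldP; exists x.
      rewrite mem_enum inE xS /=; apply/existsP; exists x2; rewrite x2S /=.
      apply/eqP; apply: int_eq; rewrite natrD intrD.
        nra.
      nra.
    by rewrite /cB /= in_itv /= yf xy2.
pose U1 := ufold cA (enum (Tset S m0)); pose U2 := ufold cB (enum (Tset S (m0 - 1))).
have mU1 : measurable U1 by apply: ufold_meas => x; exact: itv_meas.
have mU2 : measurable U2 by apply: ufold_meas => x; exact: itv_meas.
have h1 : (lambda C <= lambda (U1 `|` U2))%E.
  by apply: (le_measure (@completed_lebesgue_measure R)) => //; rewrite inE //; exact: measurableU.
have h2 : (lambda (U1 `|` U2) <= lambda U1 + lambda U2)%E.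
  exact: (measureU2 (@completed_lebesgue_measure R) mU1 mU2).
have h3 : (lambda U1 <= ((#|Tset S m0|)%:R * (f * L))%:E)%E.
  rewrite cardE; apply: ufold_le => x; first exact: itv_meas.
  apply: itv_lam_le; nra.
have h4 : (lambda U2 <= ((#|Tset S (m0 - 1)|)%:R * ((1 - f) * L))%:E)%E.
  rewrite cardE; apply: ufold_le => x; first exact: itv_meas.
  apply: itv_lam_le; nra.
have t1 : (#|Tset S m0|)%:R <= g%:R :> R by rewrite ler_nat card_T.
have t2 : (#|Tset S (m0 - 1)|)%:R <= g%:R :> R by rewrite ler_nat card_T.
apply: (le_trans h1); apply: (le_trans h2).
apply: le_trans (leeD h3 h4) _.
rewrite -EFinD lee_fin.
have fL0 : 0 <= f * L by nra.
have gL0 : 0 <= (1 - f) * L by nra.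
have := ler_wpM2r fL0 t1; have := ler_wpM2r gL0 t2.
have -> : g%:R * L = g%:R * (f * L) + g%:R * ((1 - f) * L) by ring.
lra.
Qed.

Lemma cell_lam (L : R) n (x : 'I_n.+1) : 0 < L -> lambda (cell L x) = L%:E.
Proof.
move=> L0; rewrite /cell itv_lam_co; last by nra.
congr (_%:E); ring.
Qed.

Lemma cell_disj (L : R) n (i j : 'I_n.+1) z : 0 < L -> cell L i z -> cell L j z -> i = j.
Proof.
move=> L0; rewrite /cell /= !in_itv /= => /andP[a1 a2] /andP[b1 b2].
have h1 : (i%:R : R) < j%:R + 1 by nra.
have h2 : (j%:R : R) < i%:R + 1 by nra.
move: h1 h2; rewrite !natr1 !ltr_nat => h1 h2.
apply: val_inj => /=; lia.
Qed.

Lemma per_L (d : R) g n (S : {set 'I_n.+1}) (L : R) :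
  (d%:E <= ereal_inf [set (Delta eps * ((eps ^+ 2)^-1)%R%:E)%E | eps in [set x : R | (0 < x < 1)%R]])%E ->
  ord0 \notin S -> Bstar_set g S -> (0 < #|S|)%N -> 0 < L -> n%:R * L < 1 ->
  d * (#|S|%:R ^+ 2) * L <= g%:R.
Proof.
move=> hinf S0 BS k0 L0 nL.
set k := #|S|.
pose A := ufold (cell L) (enum S).
have mA : measurable A by apply: ufold_meas => x; exact: itv_meas.
have lA : lambda A = (k%:R * L)%:E.
  rewrite /A /k cardE; apply: ufold_eq.
  - by move=> x; exact: itv_meas.
  - by move=> x; exact: cell_lam.
  - by move=> i j z; exact: cell_disj.
  - exact: enum_uniq.
have kn : (k <= n)%N.
  have : S \subset ([set~ ord0])%SET.
    apply/fintype.subsetP => x xS; rewrite !inE; by apply: contra S0 => /eqP <-.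
  move/subset_leq_card; rewrite cardsC1 card_ord /=; exact.
have kR1 : (1 : R) <= k%:R by rewrite ler1n.
have knR : (k%:R : R) <= n%:R by rewrite ler_nat.
have Asub : A `<=` `[0, 1[%classic.
  move=> z /ufoldP [x]; rewrite mem_enum => xS.
  rewrite /cell /= !in_itv /= => /andP[z1 z2].
  have x0 : (1 <= (x : nat))%N.
    rewrite lt0n; apply/negP => /eqP x0.
    have e : x = ord0 by apply: val_inj.
    by move: S0; rewrite -e xS.
  have x1 : (1 : R) <= x%:R by rewrite ler1n.
  have x2 : (x%:R : R) <= n%:R by rewrite ler_nat -ltnS ltn_ord.
  apply/andP; split; nra.
set eps := k%:R * L.
have e0 : 0 < eps by rewrite /eps; nra.
have e1 : eps < 1 by rewrite /eps; nra.
have h1 : (d%:E <= Delta eps * ((eps ^+ 2)^-1)%:E)%E.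
  apply: (le_trans hinf); apply: ereal_inf_lbound; exists eps => //=.
  by rewrite e0 e1.
have h2 : (Delta eps <= Dsym A)%E.
  by apply: ereal_inf_lbound; exists A => //; split.
have h3 : (Dsym A <= (g%:R * L)%:E)%E.
  apply: ge_ereal_sup => _ [C [CA mC sC] <-].
  exact: (@main_bound g n S L C L0 BS mC sC CA).
have ie0 : (0 : R) <= (eps ^+ 2)^-1 by rewrite invr_ge0; nra.
have h4 : (d%:E <= (g%:R * L * (eps ^+ 2)^-1)%:E)%E.
  apply: (le_trans h1); rewrite EFinM; apply: lee_wpmul2r; first by rewrite lee_fin.
  exact: le_trans h2 h3.
rewrite lee_fin in h4.
have ep2 : 0 < eps ^+ 2 by nra.
have h5 : d * eps ^+ 2 <= g%:R * L.
  by rewrite -ler_pdivlMr.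
rewrite /eps in h5; nra.
Qed.

End Main.

Theorem corollary3p2 (R : realType) (delta : R) :
  0 < delta ->
  (delta%:E <= ereal_inf [set (Delta eps * ((eps ^+ 2)^-1)%R%:E)%E | eps in [set x : R | (0 < x < 1)%R]])%E ->
  forall g n : nat, (1 <= g)%N -> (g <= n)%N ->
    (Rgn g n)%:R <= (Num.sqrt delta)^-1 * Num.sqrt (g%:R * n%:R).
Proof.
move=> d0 hinf g n g1 gn.
have B0 : 0 <= (Num.sqrt delta)^-1 * Num.sqrt (g%:R * n%:R).
  by rewrite mulr_ge0 // ?invr_ge0 sqrtr_ge0.
rewrite /Rgn; apply: (big_ind (fun x : nat => x%:R <= _)).
- exact: B0.
- by move=> x y hx hy; rewrite /maxn; case: ifP.
move=> S /andP[S0 BS].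
case: (posnP #|S|) => [->|k0]; first exact: B0.
set k := #|S|.
have gR : (1 : R) <= g%:R by rewrite ler1n.
have hk : delta * k%:R ^+ 2 <= g%:R * n%:R.
  case: (lerP (delta * k%:R ^+ 2) (g%:R * n%:R)) => // hlt.
  set a := delta * k%:R ^+ 2 in hlt *.
  have nR : (0 : R) <= n%:R by [].
  have den : 0 < a + g%:R * n%:R by nra.
  pose L := 2 * g%:R / (a + g%:R * n%:R).
  have eL : L * (a + g%:R * n%:R) = 2 * g%:R by rewrite /L divfK // gt_eqF.
  have L0 : 0 < L by rewrite /L divr_gt0 //; nra.
  have nL : n%:R * L < 1.
    have : n%:R * L * (a + g%:R * n%:R) < 1 * (a + g%:R * n%:R).
      by rewrite -mulrA eL; nra.
    by rewrite ltr_pM2r.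
  have := @per_L R delta g n S L hinf S0 BS k0 L0 nL; rewrite -/k -/a => aL.
  have : a * L * (a + g%:R * n%:R) <= g%:R * (a + g%:R * n%:R).
    by rewrite ler_pM2r.
  rewrite -mulrA eL => h.
  nra.
have sd : 0 < Num.sqrt delta by rewrite sqrtr_gt0.
have h1 : Num.sqrt delta * k%:R <= Num.sqrt (g%:R * n%:R).
  rewrite -(ger0_norm (ler0n _ k)) -sqrtr_sqr -sqrtrM; last exact: ltW.
  by rewrite ler_sqrt.
have si : 0 <= (Num.sqrt delta)^-1 by rewrite invr_ge0 ltW.
have := ler_wpM2l si h1.
by rewrite mulrA mulVf ?mul1r // gt_eqF.
Qed.
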